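(* Let $\mathcal A=\mathcal A_1\times\cdots\times\mathcal A_m$ be a finite tree multi-algebra, let $\mathtt A$ be a plenary anti-tree structure of $\mathcal A$, and let $B$ be a basic relation of $\mathcal A$. If $B_\ell\subseteq\Rsh_k^\ell B_k$ for all distinct $k,\ell$ such that $k\to\ell$ is an edge of $\mathtt A$, then $B$ is closed under projection, i.e. $B_j\subseteq\Rsh_i^jB_i$ for all distinct $i,j\in\{1,\dots,m\}$.
   Context: A finite non-associative algebra is a tuple $(\mathcal A,\cup,\neg,\emptyset,\mathcal B,\diamond,\overline{\cdot},e)$ where $(\mathcal A,\cup,\neg,\emptyset,\mathcal B)$ is a finite Boolean algebra and for all $x,y,z$: $\overline{\overline x}=x$, $\overline{x\cup y}=\overline x\cup\overline y$, $\overline{x\diamond y}=\overline y\diamond\overline x$, $e\diamond x=x\diamond e=x$, $x\diamond(y\cup z)=(x\diamond y)\cup(x\diamond z)$, $(x\diamond y)\cap\overline z=\emptyset\iff(y\diamond z)\cap\overline x=\emptyset$. $r\subseteq r'$ means $r\cup r'=r'$; atoms are basic relations; $\mathsf B_i$ is the set of atoms of $\mathcal A_i$. A projection operator from $\mathcal A$ to $\mathcal A'$ is a map $\Rsh$ with $\Rsh(r\cup r')=\Rsh r\cup\Rsh r'$ and $\Rsh\overline r=\overline{\Rsh r}$. A finite multi-algebra is a product $\mathcal A_1\times\cdots\times\mathcal A_m$ of finite non-associative algebras with projection operators $\Rsh_i^j:\mathcal A_i\to\mathcal A_j$ for all distinct $i,j$. A relation $R=(R_1,\dots,R_m)$ is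 basic if all $R_i$ are atoms; it is closed under projection if $R_j\subseteq\Rsh_i^jR_i$ for all distinct $i,j$. The inverse projection $\check\Rsh_i^j:\mathcal A_j\to\mathcal A_i$ of $\Rsh_i^j$ is the projection operator defined by: for all $b\in\mathsf B_i$, $b'\in\mathsf B_j$, $b\subseteq\check\Rsh_i^jb'\iff b'\subseteq\Rsh_i^jb$. An anti-tree structure on a set $V$ is a directed graph $(V,E)$ with a root $r\in V$ such that every $v\neq r$ has exactly one directed path from $v$ to $r$; write $v\to v'$ for $(v,v')\in E$. A plenary anti-tree structure of $\mathcal A$ is an anti-tree structure $\mathtt A$ on $\{1,\dots,m\}$ such that for all distinct $i,j$, letting $i=k_0\to\cdots\to k_s\leftarrow\cdots\leftarrow k_{s+t+1}=j$ be the shortest oriented chain between $i$ and $j$ in $\mathtt A$, every $b\in\mathsf B_i$ satisfies $\Rsh_i^jb\supseteq\check\Rsh_j^{k_{s+t}}\cdots\check\Rsh_{k_{s+1}}^{k_s}\Rsh_{k_{s-1}}^{k_s}\cdots\Rsh_i^{k_1}b$ (compositions of maps). $\mathcal A$ is a tree multi-algebra if it has a plenary anti-tree structure. *)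

(* Defs.v *)
From HB Require Import structures.
From mathcomp Require Import all_boot.
Set Implicit Arguments. Unset Strict Implicit. Unset Printing Implicit Defensive.

(* A finite Boolean algebra is represented (up to isomorphism) as the powerset
   {set T} of its finite set T of atoms; union = :|:, complement = ~:,
   empty = set0, top = setT, r \subset r' is r :|: r' = r'. *)

Definition is_atom (T : finType) (r : {set T}) : Prop :=
  r != set0 /\ forall r' : {set T}, r' \subset r -> r' = set0 \/ r' = r.

Record naAlg := NaAlg {
  carrier : finType;
  comp : {set carrier} -> {set carrier} -> {set carrier};
  conv : {set carrier} -> {set carrier};
  unit_e : {set carrier};
  conv_invol : forall x, conv (conv x) = x;
  conv_union : forall x y, conv (x :|: y) = conv x :|: conv y;
  conv_comp : forall x y, conv (comp x y) = comp (conv y) (conv x);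
  comp_e_l : forall x, comp unit_e x = x;
  comp_e_r : forall x, comp x unit_e = x;
  comp_union_r : forall x y z, comp x (y :|: z) = comp x y :|: comp x z;
  comp_cycle : forall x y z,
    (comp x y :&: conv z == set0) = (comp y z :&: conv x == set0)
}.

Definition is_projection (A A' : naAlg)
  (f : {set carrier A} -> {set carrier A'}) : Prop :=
  (forall r r', f (r :|: r') = f r :|: f r') /\
  (forall r, f (conv r) = conv (f r)).

(* Inverse projection of f : A_i -> A_j, as a map A_j -> A_i:
   the union-preserving map with, for atoms [set b], [set b'],
   [set b] \subset invproj f [set b'] <-> [set b'] \subset f [set b]. *)
Definition invproj (Ti Tj : finType) (f : {set Ti} -> {set Tj})
  (r : {set Tj}) : {set Ti} :=
  [set b | [exists b' in r, b' \in f [set b]]].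

Definition anti_tree (m : nat) (E : rel 'I_m) (r : 'I_m) : Prop :=
  forall v : 'I_m, v != r ->
    exists! p : seq 'I_m, path E v p /\ last v p = r.

Fixpoint chain_map (m : nat) (S : 'I_m -> finType)
  (F : forall x y : 'I_m, {set S x} -> {set S y}) (x : 'I_m) (ks : seq 'I_m)
  : {set S x} -> {set S (last x ks)} :=
  match ks return {set S x} -> {set S (last x ks)} with
  | [::] => fun r => r
  | y :: ks' => fun r => chain_map F ks' (F x y r)
  end.

(* An oriented chain
   i = k_0 -> ... -> k_s <- ... <- k_n = j is given by the upward list
   us = [k_1..k_s] (path E i us) and the downward list ds = [k_{s+1}..k_n]
   (each k_{a+1} -> k_a); its length is size us + size ds. *)
Definition plenary (m : nat) (A : 'I_m -> naAlg)
  (P : forall i j : 'I_m, {set carrier (A i)} -> {set carrier (A j)})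
  (E : rel 'I_m) : Prop :=
  forall (i : 'I_m) (us ds : seq 'I_m),
    i != last (last i us) ds ->
    path E i us ->
    path (fun x y => E y x) (last i us) ds ->
    (forall us' ds' : seq 'I_m,
        path E i us' ->
        path (fun x y => E y x) (last i us') ds' ->
        last (last i us') ds' = last (last i us) ds ->
        size us + size ds <= size us' + size ds') ->
    forall b : {set carrier (A i)}, is_atom b ->
      chain_map (S := fun k => carrier (A k))
                (fun x y => invproj (P y x)) ds
                (chain_map (S := fun k => carrier (A k)) P us b)
      \subset P i (last (last i us) ds) b.

(* Main.v *)
From Stdlib Require Import Classical.
Require Import Defs.
From HB Require Import structures.
From mathcomp Require Import all_boot.

Lemma atom_set1 (T : finType) (r : {set T}) : is_atom r -> exists b, r = [set b].
Proof.
case=> /set0Pn [b bin] H; exists b.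
have [] := H [set b]; first by rewrite sub1set.
  by move=> /setP /(_ b); rewrite !inE eqxx.
by [].
Qed.

Lemma proj_mono (A A' : naAlg) (f : {set carrier A} -> {set carrier A'}) (X Y : {set carrier A}) :
  is_projection f -> X \subset Y -> f X \subset f Y.
Proof. by case=> Hu _ /setUidPr <-; rewrite Hu subsetUl. Qed.

Lemma up_chain (m : nat) (A : 'I_m -> naAlg)
  (P : forall i j : 'I_m, {set carrier (A i)} -> {set carrier (A j)})
  (HP : forall i j : 'I_m, i != j -> is_projection (P i j))
  (E : rel 'I_m) (noloop : forall x y, E x y -> x != y)
  (B : forall i : 'I_m, {set carrier (A i)})
  (Hedge : forall k l : 'I_m, k != l -> E k l -> B l \subset P k l (B k)) :
  forall x us (X : {set carrier (A x)}), path E x us -> B x \subset X ->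
    B (last x us) \subset chain_map (S := fun k => carrier (A k)) P us X.
Proof.
move=> x us; elim: us x => [|y us IH] x X //= /andP [exy pu] BX.
apply: IH => //.
have nxy := noloop _ _ exy.
apply: subset_trans (Hedge _ _ nxy exy) _.
exact: (@proj_mono _ _ _ _ _ (HP _ _ nxy) BX).
Qed.

Lemma down_chain (m : nat) (A : 'I_m -> naAlg)
  (P : forall i j : 'I_m, {set carrier (A i)} -> {set carrier (A j)})
  (E : rel 'I_m) (noloop : forall x y, E x y -> x != y)
  (B : forall i : 'I_m, {set carrier (A i)})
  (HB : forall i : 'I_m, is_atom (B i))
  (Hedge : forall k l : 'I_m, k != l -> E k l -> B l \subset P k l (B k)) :
  forall x ds (X : {set carrier (A x)}), path (fun x y => E y x) x ds -> B x \subset X ->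
    B (last x ds) \subset chain_map (S := fun k => carrier (A k))
                (fun x y => invproj (P y x)) ds X.
Proof.
move=> x ds; elim: ds x => [|y ds IH] x X //= /andP [eyx pd] BX.
apply: IH => //.
have nyx := noloop _ _ eyx.
have H := Hedge _ _ nyx eyx.
have [b Hb] := atom_set1 _ _ (HB y).
have [b' Hb'] := atom_set1 _ _ (HB x).
rewrite Hb sub1set inE; apply/existsP; exists b'.
rewrite Hb' !sub1set in BX H.
by rewrite BX -Hb H.
Qed.

Theorem lemma5p11 (m : nat) (A : 'I_m -> naAlg)
  (P : forall i j : 'I_m, {set carrier (A i)} -> {set carrier (A j)})
  (HP : forall i j : 'I_m, i != j -> is_projection (P i j))
  (E : rel 'I_m) (root : 'I_m)
  (Htree : anti_tree E root)
  (Hplen : plenary P E)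
  (B : forall i : 'I_m, {set carrier (A i)})
  (HB : forall i : 'I_m, is_atom (B i))
  (Hedge : forall k l : 'I_m, k != l -> E k l -> B l \subset P k l (B k)) :
  forall i j : 'I_m, i != j -> B j \subset P i j (B i).
Proof.
move=> i j ij.
have [v vr] : exists v, v != root.
  case: (eqVneq i root) => [ir|ir]; last by exists i.
  by exists j; rewrite -ir eq_sym.
have noloop : forall x y, E x y -> x != y.
  move=> x y exy; apply/negP => /eqP xy; subst y.
  case: (eqVneq x root) => [xr|xr].
    subst x.
    have [p [[pp pl] pu]] := Htree v vr.
    have := pu (rcons p root); rewrite rcons_path pp pl exy last_rcons.
    move=> /(_ (conj erefl erefl)) /(congr1 size); rewrite size_rcons.
    by move=> /n_Sn.
  have [p [[pp pl] pu]] := Htree x xr.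
  have := pu (x :: p); rewrite /= exy pp pl.
  by move=> /(_ (conj erefl erefl)) /(congr1 size) /= /n_Sn.
have topath : forall x, exists p, path E x p /\ last x p = root.
  move=> x; case: (eqVneq x root) => [->|xr]; first by exists [::].
  by have [p [H _]] := Htree x xr; exists p.
pose chain us ds := path E i us /\ path (fun x y => E y x) (last i us) ds /\
   last (last i us) ds = j.
have ch0 : exists us ds, chain us ds.
  have [pi [pip pil]] := topath i.
  have [pj [pjp pjl]] := topath j.
  exists pi, (rev (belast j pj)); split => //; split.
    by rewrite pil -pjl rev_path.
  rewrite pil; case: pj pjp pjl => [|y pj] //= _ <-.
  by rewrite rev_cons last_rcons.
have minex : forall n us ds, size us + size ds <= n -> chain us ds ->
  exists us ds, chain us ds /\ forall us' ds', chain us' ds' ->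
     size us + size ds <= size us' + size ds'.
  elim=> [|n IH] us ds sz ch;
    (case: (classic (exists us' ds', chain us' ds' /\
                size us' + size ds' < size us + size ds)) =>
     [[us' [ds' [ch' lt]]]|nex];
    [ | exists us, ds; split => // us' ds' ch'; rewrite leqNgt; apply/negP => lt;
        by apply: nex; exists us', ds']).
    by move: (leq_trans lt sz).
  by apply: (IH us' ds') => //; rewrite -ltnS (leq_trans lt sz).
have [us0 [ds0 ch0']] := ch0.
have [us [ds [[pu [pd lj]] mn]]] := minex _ us0 ds0 (leqnn _) ch0'.
subst j.
apply: subset_trans (Hplen i us ds ij pu pd _ (B i) (HB i)).
  apply: (@down_chain m A P E noloop B HB Hedge) => //.
  exact: (@up_chain m A P HP E noloop B Hedge i us (B i) pu (subxx _)).
move=> us' ds' pu' pd' l'; apply: mn; split => //.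
Qed.
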